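(* Let $L\ge 2$ and $N$ be integers with $2\le N\le L$, let $U>\frac{8}{L}$, and let $\phi\in\mathbb{R}$ with $0\le\phi<\frac{2\pi}{L}$. Consider the Lieb–Wu equations with one down-spin, i.e. the system \[ e^{\sqrt{-1}\,k_iL}=\frac{\lambda-\sin(k_i+\phi)-\sqrt{-1}\,U/4}{\lambda-\sin(k_i+\phi)+\sqrt{-1}\,U/4}\quad(i=1,\dots,N),\qquad \prod_{i=1}^{N}\frac{\lambda-\sin(k_i+\phi)-\sqrt{-1}\,U/4}{\lambda-\sin(k_i+\phi)+\sqrt{-1}\,U/4}=1, \] in the unknowns $k_1,\dots,k_N,\lambda$. Then these equations have $\binom{L}{N}(N-1)$ real solutions.
   Context: A real solution is a solution in which $\lambda\in\mathbb{R}$ and all $k_1,\dots,k_N$ are real numbers taken modulo $2\pi$ (in $[0,2\pi)$) that are pairwise distinct; solutions are counted as unordered sets $\{k_1,\dots,k_N\}$ together with $\lambda$. *)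

(* Defs.v *)
From Stdlib Require Import Reals List Sorted.
From Coquelicot Require Import Coquelicot.
Open Scope R_scope.

Definition cexpi (x : R) : C := (cos x, sin x).

Definition lw_factor (U phi lam k : R) : C :=
  Cdiv (lam - sin (k + phi), - (U / 4)) (lam - sin (k + phi), U / 4).

(* A real solution: the unordered set {k_1,...,k_N} of pairwise distinct reals
   in [0, 2 pi) is represented by the unique strictly increasing list
   enumerating it; together with lambda. *)
Definition LW_real_solution (L N : nat) (U phi : R) (s : list R * R) : Prop :=
  let (ks, lam) := s in
  length ks = N /\
  Sorted Rlt ks /\
  (forall k, In k ks -> 0 <= k < 2 * PI) /\
  (forall k, In k ks -> cexpi (k * INR L) = lw_factor U phi lam k) /\
  fold_right Cmult (RtoC 1) (map (lw_factor U phi lam) ks) = RtoC 1.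

(* Main.v *)
Require Import Defs.
From Stdlib Require Import Reals List Sorted Permutation Lia Lra ClassicalEpsilon ZArith.
From Coquelicot Require Import Coquelicot.
Open Scope R_scope.

Lemma Z_nat_cases (j : Z) : exists n : nat, j = Z.of_nat n \/ j = (- Z.of_nat n)%Z.
Proof.
  destruct (Z.le_gt_cases 0 j).
  - exists (Z.to_nat j); left; lia.
  - exists (Z.to_nat (- j)); right; lia.
Qed.

Lemma cos_periodZ (x : R) (j : Z) : cos (x + 2 * PI * IZR j) = cos x.
Proof.
  destruct (Z_nat_cases j) as [n [-> | ->]].
  - rewrite <- INR_IZR_INZ. replace (x + 2*PI*INR n) with (x + 2 * INR n * PI) by ring.
    apply cos_period.
  - rewrite opp_IZR, <- INR_IZR_INZ.
    set (y := x + 2 * PI * - INR n).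
    replace x with (y + 2 * INR n * PI) by (unfold y; ring).
    now rewrite cos_period.
Qed.

Lemma sin_periodZ (x : R) (j : Z) : sin (x + 2 * PI * IZR j) = sin x.
Proof.
  destruct (Z_nat_cases j) as [n [-> | ->]].
  - rewrite <- INR_IZR_INZ. replace (x + 2*PI*INR n) with (x + 2 * INR n * PI) by ring.
    apply sin_period.
  - rewrite opp_IZR, <- INR_IZR_INZ.
    set (y := x + 2 * PI * - INR n).
    replace x with (y + 2 * INR n * PI) by (unfold y; ring).
    now rewrite sin_period.
Qed.

Lemma cexpi_eq_iff x y : cexpi x = cexpi y <-> exists j : Z, x = y + 2 * PI * IZR j.
Proof.
  split.
  - unfold cexpi; intros H. injection H as Hc Hs.
    assert (Hsd : sin (x - y) = 0).
    { rewrite sin_minus, Hc, Hs. ring. }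
    assert (Hcd : cos (x - y) = 1).
    { rewrite cos_minus, Hc, Hs. pose proof (sin2_cos2 y) as E; unfold Rsqr in E; lra. }
    destruct (sin_eq_0_0 _ Hsd) as [k Hk].
    destruct (Zeven_odd_dec k) as [He | Ho].
    + destruct (Zeven_ex _ He) as [m Hm]. exists m.
      rewrite Hm, mult_IZR in Hk. lra.
    + exfalso. destruct (Zodd_ex _ Ho) as [m Hm].
      rewrite Hm, plus_IZR, mult_IZR in Hk. rewrite Hk in Hcd.
      replace ((2 * IZR m + 1) * PI) with ((0 + 2*PI*IZR m) + PI) in Hcd by ring.
      rewrite neg_cos, cos_periodZ, cos_0 in Hcd. lra.
  - intros [j ->]. unfold cexpi. now rewrite cos_periodZ, sin_periodZ.
Qed.

Lemma cexpi_mult x y : Cmult (cexpi x) (cexpi y) = cexpi (x + y).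
Proof. unfold cexpi, Cmult; simpl. rewrite cos_plus, sin_plus. f_equal; ring. Qed.

Lemma fold_cexpi l : fold_right Cmult (RtoC 1) (map cexpi l) = cexpi (fold_right Rplus 0 l).
Proof.
  induction l as [|a l IH]; simpl.
  - unfold cexpi, RtoC. now rewrite cos_0, sin_0.
  - rewrite IH. apply cexpi_mult.
Qed.

Definition th (c phi lam k : R) : R := 2 * atan ((lam - sin (k + phi)) / c).

Lemma lw_eq U phi lam k : 0 < U ->
  lw_factor U phi lam k = cexpi (PI + th (U/4) phi lam k).
Proof.
  intros HU. unfold lw_factor, th, cexpi, Cdiv, Cmult, Cinv. simpl.
  set (a := lam - sin (k + phi)). set (c := U / 4).
  assert (Hc : 0 < c) by (unfold c; lra).
  rewrite (Rplus_comm PI), neg_cos, neg_sin, cos_2a, sin_2a, cos_atan, sin_atan.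
  set (z := a / c). set (s := sqrt (1 + z²)).
  assert (Hz : 0 < 1 + z²) by (pose proof (Rle_0_sqr z); lra).
  assert (Hs : s * s = 1 + z²) by (unfold s; apply sqrt_sqrt; lra).
  assert (Hs0 : s <> 0) by (intro E; rewrite E in Hs; lra).
  assert (HD : a ^ 2 + c ^ 2 <> 0) by (pose proof (pow2_ge_0 a); nra).
  f_equal.
  - replace (1 / s * (1 / s) - z / s * (z / s)) with ((1 - z * z) / (s * s)) by (field; auto).
    rewrite Hs. unfold z, Rsqr. field. split; lra.
  - replace (2 * (z / s) * (1 / s)) with ((2 * z) / (s * s)) by (field; auto).
    rewrite Hs. unfold z, Rsqr. field. split; lra.
Qed.

Lemma lip_cont (f : R -> R) (M : R) :
  (forall x y, Rabs (f x - f y) <= M * Rabs (x - y)) -> continuity f.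
Proof.
  intros H x0 eps Heps.
  assert (HM : 0 <= M).
  { specialize (H 1 0). pose proof (Rabs_pos (f 1 - f 0)).
    rewrite Rminus_0_r, Rabs_R1 in H. lra. }
  exists (eps / (M + 1)). split.
  - apply Rdiv_lt_0_compat; lra.
  - intros x [_ Hx]. simpl in *. unfold R_dist in *.
    eapply Rle_lt_trans; [apply H|].
    apply Rle_lt_trans with (M * (eps / (M + 1))).
    + apply Rmult_le_compat_l; lra.
    + apply Rmult_lt_reg_r with (M + 1); [lra|].
      field_simplify; [|lra]. nra.
Qed.

Lemma atan_lip x y : Rabs (atan x - atan y) <= Rabs (x - y).
Proof.
  destruct (MVT_abs atan (fun t => / (1 + t ^ 2)) y x) as [c [Hc _]].
  { intros; apply derivable_pt_lim_atan. }
  rewrite Hc.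
  assert (H1 : 0 < / (1 + c ^ 2) <= 1).
  { assert (0 <= c ^ 2) by (apply pow2_ge_0). split.
    - apply Rinv_0_lt_compat; lra.
    - rewrite <- Rinv_1. apply Rinv_le_contravar; lra. }
  rewrite (Rabs_right (/ (1 + c^2))) by lra.
  pose proof (Rabs_pos (x - y)). nra.
Qed.

Lemma sin_lip x y : Rabs (sin x - sin y) <= Rabs (x - y).
Proof.
  destruct (MVT_abs sin cos y x) as [c [Hc _]].
  { intros; apply derivable_pt_lim_sin. }
  rewrite Hc.
  assert (Rabs (cos c) <= 1) by (apply Rabs_le; apply COS_bound).
  pose proof (Rabs_pos (x - y)). pose proof (Rabs_pos (cos c)). nra.
Qed.

Lemma atan_le x y : x <= y -> atan x <= atan y.
Proof.
  intros [H|H]; [left; now apply atan_increasing | right; now subst].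
Qed.

Lemma th_lip c phi l1 k1 l2 k2 : 0 < c ->
  Rabs (th c phi l1 k1 - th c phi l2 k2) <= (2 / c) * (Rabs (l1 - l2) + Rabs (k1 - k2)).
Proof.
  intros Hc. unfold th.
  replace (2 * atan ((l1 - sin (k1 + phi)) / c) - 2 * atan ((l2 - sin (k2 + phi)) / c))
    with (2 * (atan ((l1 - sin (k1 + phi)) / c) - atan ((l2 - sin (k2 + phi)) / c))) by ring.
  rewrite Rabs_mult, (Rabs_right 2) by lra.
  eapply Rle_trans. { apply Rmult_le_compat_l; [lra|]. apply atan_lip. }
  replace ((l1 - sin (k1 + phi)) / c - (l2 - sin (k2 + phi)) / c)
    with (((l1 - l2) - (sin (k1 + phi) - sin (k2 + phi))) * / c) by (field; lra).
  rewrite Rabs_mult, (Rabs_right (/ c)) by (apply Rle_ge, Rlt_le, Rinv_0_lt_compat; lra).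
  pose proof (sin_lip (k1 + phi) (k2 + phi)) as Hs.
  replace (k1 + phi - (k2 + phi)) with (k1 - k2) in Hs by ring.
  pose proof (Rabs_triang (l1 - l2) (- (sin (k1 + phi) - sin (k2 + phi)))) as Ht.
  rewrite Rabs_Ropp in Ht.
  assert (0 < / c) by (apply Rinv_0_lt_compat; lra).
  unfold Rdiv.
  replace (l1 - l2 - (sin (k1 + phi) - sin (k2 + phi))) with
    (l1 - l2 + - (sin (k1 + phi) - sin (k2 + phi))) by ring.
  assert (HH : Rabs (l1 - l2 + - (sin (k1 + phi) - sin (k2 + phi))) <= Rabs (l1 - l2) + Rabs (k1 - k2)) by lra.
  assert (HH2 := Rmult_le_compat_r (/ c) _ _ (Rlt_le _ _ H) HH).
  lra.
Qed.

Lemma th_bound c phi lam k : - PI < th c phi lam k < PI.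
Proof. unfold th. pose proof (atan_bound ((lam - sin (k + phi)) / c)). lra. Qed.

Lemma th_lower c phi lam k : 0 < c -> 2 * atan ((lam - 1) / c) <= th c phi lam k.
Proof.
  intros Hc. unfold th. apply Rmult_le_compat_l; [lra|]. apply atan_le.
  unfold Rdiv. apply Rmult_le_compat_r; [left; now apply Rinv_0_lt_compat|].
  pose proof (SIN_bound (k + phi)). lra.
Qed.

Lemma th_upper c phi lam k : 0 < c -> th c phi lam k <= 2 * atan ((lam + 1) / c).
Proof.
  intros Hc. unfold th. apply Rmult_le_compat_l; [lra|]. apply atan_le.
  unfold Rdiv. apply Rmult_le_compat_r; [left; now apply Rinv_0_lt_compat|].
  pose proof (SIN_bound (k + phi)). lra.
Qed.

Lemma th_period c phi lam k j : th c phi lam (k + 2 * PI * IZR j) = th c phi lam k.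
Proof.
  unfold th. replace (k + 2 * PI * IZR j + phi) with ((k + phi) + 2 * PI * IZR j) by ring.
  now rewrite sin_periodZ.
Qed.

Definition hh (L : nat) (c phi lam k : R) : R := k * INR L - th c phi lam k.

Lemma hh_strict L c phi lam k1 k2 : 0 < c -> 2 / c < INR L -> k1 < k2 ->
  hh L c phi lam k1 < hh L c phi lam k2.
Proof.
  intros Hc HL Hk. unfold hh.
  pose proof (th_lip c phi lam k2 lam k1 Hc) as H.
  rewrite Rminus_diag, Rabs_R0, Rplus_0_l, (Rabs_right (k2 - k1)) in H by lra.
  pose proof (Rle_abs (th c phi lam k2 - th c phi lam k1)).
  assert (2 / c * (k2 - k1) < INR L * (k2 - k1)) by (apply Rmult_lt_compat_r; lra).
  lra.
Qed.

Lemma hh_inj L c phi lam k1 k2 : 0 < c -> 2 / c < INR L ->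
  hh L c phi lam k1 = hh L c phi lam k2 -> k1 = k2.
Proof.
  intros Hc HL E. destruct (Rtotal_order k1 k2) as [H|[H|H]]; auto.
  - pose proof (hh_strict L c phi lam _ _ Hc HL H). lra.
  - pose proof (hh_strict L c phi lam _ _ Hc HL H). lra.
Qed.

Lemma hh_period L c phi lam k j :
  hh L c phi lam (k + 2 * PI * IZR j) = hh L c phi lam k + 2 * PI * IZR j * INR L.
Proof. unfold hh. rewrite th_period. ring. Qed.

Lemma hh_surj L c phi lam v : 0 < c -> 2 / c < INR L -> exists k, hh L c phi lam k = v.
Proof.
  intros Hc HL.
  assert (HL0 : 0 < INR L) by (assert (0 < 2 / c) by (apply Rdiv_lt_0_compat; lra); lra).
  set (f := fun k => hh L c phi lam k - v).
  assert (Hf : continuity f).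
  { apply (lip_cont f (INR L + 2 / c)). intros x y. unfold f, hh.
    pose proof (th_lip c phi lam x lam y Hc) as H.
    rewrite Rminus_diag, Rabs_R0, Rplus_0_l in H.
    replace (x * INR L - th c phi lam x - v - (y * INR L - th c phi lam y - v))
      with ((x - y) * INR L + - (th c phi lam x - th c phi lam y)) by ring.
    eapply Rle_trans; [apply Rabs_triang|]. rewrite Rabs_Ropp, Rabs_mult, (Rabs_right (INR L)) by lra.
    lra. }
  set (x1 := (v - PI) / INR L). set (x2 := (v + PI) / INR L).
  pose proof PI_RGT_0.
  assert (H12 : x1 < x2) by (unfold x1, x2; apply Rmult_lt_compat_r; [apply Rinv_0_lt_compat|]; lra).
  assert (F1 : f x1 < 0).
  { unfold f, hh, x1. pose proof (th_bound c phi lam ((v - PI) / INR L)).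
    replace ((v - PI) / INR L * INR L) with (v - PI) by (field; lra). lra. }
  assert (F2 : 0 < f x2).
  { unfold f, hh, x2. pose proof (th_bound c phi lam ((v + PI) / INR L)).
    replace ((v + PI) / INR L * INR L) with (v + PI) by (field; lra). lra. }
  destruct (IVT f x1 x2 Hf H12 F1 F2) as [z [_ Hz]].
  exists z. unfold f in Hz. lra.
Qed.

Definition Kz (L : nat) (c phi lam : R) (I : Z) : R :=
  epsilon (inhabits 0) (fun k => hh L c phi lam k = PI + 2 * PI * IZR I).

Lemma Kz_spec L c phi lam I : 0 < c -> 2 / c < INR L ->
  hh L c phi lam (Kz L c phi lam I) = PI + 2 * PI * IZR I.
Proof.
  intros Hc HL. unfold Kz. apply epsilon_spec. now apply hh_surj.
Qed.

Lemma Kz_unique L c phi lam I k : 0 < c -> 2 / c < INR L ->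
  hh L c phi lam k = PI + 2 * PI * IZR I -> k = Kz L c phi lam I.
Proof.
  intros Hc HL H. apply (hh_inj L c phi lam); auto. rewrite Kz_spec; auto.
Qed.

Lemma Kz_shift L c phi lam I j : 0 < c -> 2 / c < INR L ->
  Kz L c phi lam (I + Z.of_nat L * j) = Kz L c phi lam I + 2 * PI * IZR j.
Proof.
  intros Hc HL. symmetry. apply Kz_unique; auto.
  rewrite hh_period, Kz_spec by auto. rewrite plus_IZR, mult_IZR, <- INR_IZR_INZ. ring.
Qed.

Lemma Kz_lip L c phi l1 l2 I : 0 < c -> 2 / c < INR L ->
  Rabs (Kz L c phi l1 I - Kz L c phi l2 I) <= (2 / c) / (INR L - 2 / c) * Rabs (l1 - l2).
Proof.
  intros Hc HL.
  set (K1 := Kz L c phi l1 I). set (K2 := Kz L c phi l2 I).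
  pose proof (Kz_spec L c phi l1 I Hc HL) as E1. pose proof (Kz_spec L c phi l2 I Hc HL) as E2.
  fold K1 in E1. fold K2 in E2. unfold hh in E1, E2.
  assert (E : (K1 - K2) * INR L = th c phi l1 K1 - th c phi l2 K2) by lra.
  pose proof (th_lip c phi l1 K1 l2 K2 Hc) as H. rewrite <- E in H.
  assert (HL0 : 0 < INR L) by (assert (0 < 2 / c) by (apply Rdiv_lt_0_compat; lra); lra).
  rewrite Rabs_mult, (Rabs_right (INR L)) in H by lra.
  set (a := 2 / c) in *. set (d := INR L - a).
  assert (Hd : 0 < d) by (unfold d; lra). assert (Hd' : d <> 0) by lra.
  apply Rmult_le_reg_l with d; [lra|].
  replace (d * (a / d * Rabs (l1 - l2))) with (a * Rabs (l1 - l2)) by (field; exact Hd').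
  unfold d. lra.
Qed.

Lemma Kz_mono L c phi l1 l2 I : 0 < c -> 2 / c < INR L -> l1 < l2 ->
  Kz L c phi l1 I < Kz L c phi l2 I.
Proof.
  intros Hc HL Hl.
  set (K1 := Kz L c phi l1 I). set (K2 := Kz L c phi l2 I).
  pose proof (Kz_spec L c phi l1 I Hc HL) as E1. pose proof (Kz_spec L c phi l2 I Hc HL) as E2.
  fold K1 in E1. fold K2 in E2. unfold hh in E1, E2.
  destruct (Rlt_le_dec K1 K2) as [H|H]; auto. exfalso.
  assert (HL0 : 0 < INR L) by (assert (0 < 2 / c) by (apply Rdiv_lt_0_compat; lra); lra).
  assert (Hth : th c phi l2 K2 <= th c phi l1 K1).
  { assert (K2 * INR L <= K1 * INR L) by (apply Rmult_le_compat_r; lra). lra. }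
  unfold th in Hth, E1, E2.
  set (x1 := (l1 - sin (K1 + phi)) / c) in *. set (x2 := (l2 - sin (K2 + phi)) / c) in *.
  assert (Hx : x2 <= x1).
  { destruct (Rle_dec x2 x1) as [?|Hn]; auto. apply Rnot_le_lt in Hn.
    pose proof (atan_increasing _ _ Hn). lra. }
  assert (Hs := sin_lip (K2 + phi) (K1 + phi)).
  replace (K2 + phi - (K1 + phi)) with (K2 - K1) in Hs by ring.
  rewrite (Rabs_left1 (K2 - K1)) in Hs by lra.
  pose proof (Rle_abs (sin (K2 + phi) - sin (K1 + phi))).
  assert (Hx' : x2 * c <= x1 * c) by (apply Rmult_le_compat_r; lra).
  unfold x1, x2 in Hx'. replace ((l1 - sin (K1 + phi)) / c * c) with (l1 - sin (K1 + phi)) in Hx' by (field; lra).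
  replace ((l2 - sin (K2 + phi)) / c * c) with (l2 - sin (K2 + phi)) in Hx' by (field; lra).
  assert (Hd : 0 < K1 - K2) by lra.
  assert (Ha := atan_lip x1 x2). assert (Rabs (x1 - x2) = x1 - x2) by (apply Rabs_right; lra).
  pose proof (Rle_abs (atan x1 - atan x2)).
  assert (HE : (K1 - K2) * INR L = 2 * (atan x1 - atan x2)) by lra.
  assert (Hx12 : (x1 - x2) * c < (K1 - K2)).
  { replace ((x1 - x2) * c) with ((l1 - sin (K1 + phi)) - (l2 - sin (K2 + phi))) by (unfold x1, x2; field; lra).
    lra. }
  assert (Hx12' : x1 - x2 < (K1 - K2) / c).
  { apply Rmult_lt_reg_r with c; auto. replace ((K1 - K2) / c * c) with (K1 - K2) by (field; lra). lra. }
  assert ((K1 - K2) * INR L < 2 / c * (K1 - K2)).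
  { replace (2 / c * (K1 - K2)) with (2 * ((K1 - K2) / c)) by (field; lra).
    set (q := (K1 - K2) / c) in *. set (w := (K1 - K2) * INR L) in *.
    pose proof (Rle_abs (atan x1 - atan x2)). lra. }
  assert (2 / c * (K1 - K2) < INR L * (K1 - K2)) by (apply Rmult_lt_compat_r; lra).
  lra.
Qed.

Definition Tr (L : nat) (c phi lam : R) (r : nat) : R := th c phi lam (Kz L c phi lam (Z.of_nat r)).

Lemma Tr_eq L c phi lam r : 0 < c -> 2 / c < INR L ->
  Tr L c phi lam r = Kz L c phi lam (Z.of_nat r) * INR L - PI - 2 * PI * INR r.
Proof.
  intros Hc HL. pose proof (Kz_spec L c phi lam (Z.of_nat r) Hc HL) as E.
  unfold hh in E. unfold Tr. rewrite (INR_IZR_INZ r). lra.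
Qed.

Lemma INR_L_pos L c : 0 < c -> 2 / c < INR L -> 0 < INR L.
Proof. intros Hc HL. assert (0 < 2 / c) by (apply Rdiv_lt_0_compat; lra). lra. Qed.

Lemma Tr_mono L c phi l1 l2 r : 0 < c -> 2 / c < INR L -> l1 < l2 ->
  Tr L c phi l1 r < Tr L c phi l2 r.
Proof.
  intros Hc HL Hl. rewrite !Tr_eq by auto.
  pose proof (Kz_mono L c phi l1 l2 (Z.of_nat r) Hc HL Hl).
  pose proof (INR_L_pos L c Hc HL).
  assert (Kz L c phi l1 (Z.of_nat r) * INR L < Kz L c phi l2 (Z.of_nat r) * INR L)
    by (apply Rmult_lt_compat_r; auto). lra.
Qed.

Definition Mc (L : nat) (c : R) : R := INR L * ((2 / c) / (INR L - 2 / c)).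

Lemma Tr_lip L c phi l1 l2 r : 0 < c -> 2 / c < INR L ->
  Rabs (Tr L c phi l1 r - Tr L c phi l2 r) <= Mc L c * Rabs (l1 - l2).
Proof.
  intros Hc HL. rewrite !Tr_eq by auto.
  pose proof (Kz_lip L c phi l1 l2 (Z.of_nat r) Hc HL).
  pose proof (INR_L_pos L c Hc HL).
  replace (Kz L c phi l1 (Z.of_nat r) * INR L - PI - 2 * PI * INR r -
     (Kz L c phi l2 (Z.of_nat r) * INR L - PI - 2 * PI * INR r))
   with ((Kz L c phi l1 (Z.of_nat r) - Kz L c phi l2 (Z.of_nat r)) * INR L) by ring.
  rewrite Rabs_mult, (Rabs_right (INR L)) by lra. unfold Mc.
  rewrite Rmult_assoc, (Rmult_comm _ (INR L)).
  apply Rmult_le_compat_l; lra.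
Qed.

Definition G (L : nat) (c phi : R) (A : list nat) (lam : R) : R :=
  fold_right Rplus 0 (map (Tr L c phi lam) A).

Lemma G_lip L c phi A l1 l2 : 0 < c -> 2 / c < INR L ->
  Rabs (G L c phi A l1 - G L c phi A l2) <= INR (length A) * Mc L c * Rabs (l1 - l2).
Proof.
  intros Hc HL. induction A as [|a A IH]; unfold G in *; cbn [map fold_right length].
  - rewrite Rminus_diag, Rabs_R0. simpl INR. lra.
  - pose proof (Tr_lip L c phi l1 l2 a Hc HL).
    replace (Tr L c phi l1 a + fold_right Rplus 0 (map (Tr L c phi l1) A) -
      (Tr L c phi l2 a + fold_right Rplus 0 (map (Tr L c phi l2) A))) with
      ((Tr L c phi l1 a - Tr L c phi l2 a) + (fold_right Rplus 0 (map (Tr L c phi l1) A) -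
       fold_right Rplus 0 (map (Tr L c phi l2) A))) by ring.
    eapply Rle_trans; [apply Rabs_triang|].
    rewrite S_INR. lra.
Qed.

Lemma G_cont L c phi A : 0 < c -> 2 / c < INR L -> continuity (G L c phi A).
Proof. intros Hc HL. apply (lip_cont _ (INR (length A) * Mc L c)). intros; now apply G_lip. Qed.

Lemma G_mono_le L c phi A l1 l2 : 0 < c -> 2 / c < INR L -> l1 <= l2 ->
  G L c phi A l1 <= G L c phi A l2.
Proof.
  intros Hc HL [Hl|Hl]; [|subst; lra].
  induction A as [|a A IH]; unfold G in *; cbn [map fold_right length]; [simpl INR; lra|].
  pose proof (Tr_mono L c phi l1 l2 a Hc HL Hl). lra.
Qed.

Lemma G_mono L c phi A l1 l2 : 0 < c -> 2 / c < INR L -> A <> nil -> l1 < l2 ->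
  G L c phi A l1 < G L c phi A l2.
Proof.
  intros Hc HL HA Hl. destruct A as [|a A]; [congruence|].
  pose proof (G_mono_le L c phi A l1 l2 Hc HL (Rlt_le _ _ Hl)).
  unfold G in *; cbn [map fold_right length].
  pose proof (Tr_mono L c phi l1 l2 a Hc HL Hl). lra.
Qed.

Lemma G_inj L c phi A l1 l2 : 0 < c -> 2 / c < INR L -> A <> nil ->
  G L c phi A l1 = G L c phi A l2 -> l1 = l2.
Proof.
  intros Hc HL HA E. destruct (Rtotal_order l1 l2) as [H|[H|H]]; auto.
  - pose proof (G_mono L c phi A _ _ Hc HL HA H). lra.
  - pose proof (G_mono L c phi A _ _ Hc HL HA H). lra.
Qed.

Lemma G_bound_le L c phi A lam :
  - INR (length A) * PI <= G L c phi A lam <= INR (length A) * PI.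
Proof.
  induction A as [|a A IH]; unfold G in *; cbn [map fold_right length]; [simpl INR; lra|].
  pose proof (th_bound c phi lam (Kz L c phi lam (Z.of_nat a))) as Hb. change (th c phi lam (Kz L c phi lam (Z.of_nat a))) with (Tr L c phi lam a) in Hb.
  rewrite S_INR. lra.
Qed.

Lemma G_bound L c phi A lam : A <> nil ->
  - INR (length A) * PI < G L c phi A lam < INR (length A) * PI.
Proof.
  intros HA. destruct A as [|a A]; [congruence|].
  pose proof (G_bound_le L c phi A lam). unfold G in *; cbn [map fold_right length].
  pose proof (th_bound c phi lam (Kz L c phi lam (Z.of_nat a))) as Hb. change (th c phi lam (Kz L c phi lam (Z.of_nat a))) with (Tr L c phi lam a) in Hb.
  rewrite S_INR. lra.
Qed.

Lemma G_lower L c phi A lam : 0 < c ->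
  INR (length A) * (2 * atan ((lam - 1) / c)) <= G L c phi A lam.
Proof.
  intros Hc. induction A as [|a A IH]; unfold G in *; cbn [map fold_right length]; [simpl INR; lra|].
  pose proof (th_lower c phi lam (Kz L c phi lam (Z.of_nat a)) Hc) as Hb. change (th c phi lam (Kz L c phi lam (Z.of_nat a))) with (Tr L c phi lam a) in Hb.
  rewrite S_INR. lra.
Qed.

Lemma G_upper L c phi A lam : 0 < c ->
  G L c phi A lam <= INR (length A) * (2 * atan ((lam + 1) / c)).
Proof.
  intros Hc. induction A as [|a A IH]; unfold G in *; cbn [map fold_right length]; [simpl INR; lra|].
  pose proof (th_upper c phi lam (Kz L c phi lam (Z.of_nat a)) Hc) as Hb. change (th c phi lam (Kz L c phi lam (Z.of_nat a))) with (Tr L c phi lam a) in Hb.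
  rewrite S_INR. lra.
Qed.

Lemma G_surj L c phi A y : 0 < c -> 2 / c < INR L -> A <> nil ->
  - INR (length A) * PI < y < INR (length A) * PI ->
  exists lam, G L c phi A lam = y.
Proof.
  intros Hc HL HA Hy.
  set (n := INR (length A)) in *.
  assert (Hn : 0 < n).
  { unfold n. destruct A; [congruence|]. simpl length. rewrite S_INR. pose proof (pos_INR (length A)). lra. }
  pose proof PI_RGT_0.
  set (w := y / (2 * n)).
  assert (Hw : - (PI / 2) < w < PI / 2).
  { unfold w. split.
    - apply Rmult_lt_reg_r with (2 * n); [lra|]. unfold Rdiv. rewrite Rmult_assoc, Rinv_l by lra. nra.
    - apply Rmult_lt_reg_r with (2 * n); [lra|]. unfold Rdiv. rewrite Rmult_assoc, Rinv_l by lra. nra. }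
  assert (Hy' : y = 2 * n * w) by (unfold w; field; lra).
  set (w2 := (w + PI / 2) / 2). set (w1 := (w - PI / 2) / 2).
  set (lam2 := 1 + c * tan w2). set (lam1 := -1 + c * tan w1).
  assert (G2 : y < G L c phi A lam2).
  { eapply Rlt_le_trans; [|apply G_lower; auto]. fold n.
    replace ((lam2 - 1) / c) with (tan w2) by (unfold lam2; field; lra).
    rewrite atan_tan by (unfold w2; lra). unfold w2. nra. }
  assert (G1 : G L c phi A lam1 < y).
  { eapply Rle_lt_trans; [apply G_upper; auto|]. fold n.
    replace ((lam1 + 1) / c) with (tan w1) by (unfold lam1; field; lra).
    rewrite atan_tan by (unfold w1; lra). unfold w1. nra. }
  assert (H12 : lam1 < lam2).
  { destruct (Rlt_le_dec lam1 lam2) as [?|Hle]; auto.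
    pose proof (G_mono_le L c phi A _ _ Hc HL Hle). lra. }
  set (f := fun l => G L c phi A l - y).
  assert (Hf : continuity f).
  { unfold f. apply continuity_minus; [now apply G_cont | apply continuity_const; intros ? ?; auto]. }
  destruct (IVT f lam1 lam2 Hf H12) as [z [_ Hz]]; unfold f; [lra|lra|].
  exists z. unfold f in Hz. lra.
Qed.

Lemma sum_perm (l1 l2 : list R) : Permutation l1 l2 ->
  fold_right Rplus 0 l1 = fold_right Rplus 0 l2.
Proof. induction 1; simpl; try lra. Qed.

Lemma G_perm L c phi A B lam : Permutation A B -> G L c phi A lam = G L c phi B lam.
Proof. intros H. unfold G. apply sum_perm. now apply Permutation_map. Qed.

Definition red (x : R) : R :=
  epsilon (inhabits 0) (fun y => 0 <= y < 2 * PI /\ exists j : Z, x = y + 2 * PI * IZR j).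

Lemma red_spec x : 0 <= red x < 2 * PI /\ exists j : Z, x = red x + 2 * PI * IZR j.
Proof.
  unfold red. apply epsilon_spec.
  pose proof PI_RGT_0.
  destruct (archimed (x / (2 * PI))) as [H1 H2].
  set (j := (up (x / (2 * PI)) - 1)%Z).
  exists (x - 2 * PI * IZR j). split; [|exists j; ring].
  unfold j. rewrite minus_IZR.
  set (u := IZR (up (x / (2 * PI)))) in *.
  assert (E : x = (x / (2 * PI)) * (2 * PI)) by (field; lra).
  split.
  - assert ((u - 1) * (2 * PI) <= x / (2 * PI) * (2 * PI)) by (apply Rmult_le_compat_r; lra). nra.
  - assert (x / (2 * PI) * (2 * PI) < u * (2 * PI)) by (apply Rmult_lt_compat_r; lra). nra.
Qed.

Lemma IZR_small_0 (z : Z) : -1 < IZR z < 1 -> z = 0%Z.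
Proof.
  intros [H1 H2]. apply lt_IZR in H2. replace (-1) with (IZR (-1)) in H1 by reflexivity.
  apply lt_IZR in H1. lia.
Qed.

Lemma red_unique x y j : 0 <= y < 2 * PI -> x = y + 2 * PI * IZR j -> red x = y.
Proof.
  intros Hy Hx. destruct (red_spec x) as [Hr [j' Hj']].
  pose proof PI_RGT_0.
  assert (E : red x - y = 2 * PI * IZR (j - j')) by (rewrite minus_IZR; lra).
  assert (Hz : -1 < IZR (j - j') < 1).
  { split.
    - apply Rmult_lt_reg_l with (2 * PI); lra.
    - apply Rmult_lt_reg_l with (2 * PI); lra. }
  apply IZR_small_0 in Hz. rewrite Hz in E. simpl in E. lra.
Qed.

Definition kk (L : nat) (c phi lam : R) (r : nat) : R := red (Kz L c phi lam (Z.of_nat r)).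

Lemma kk_range L c phi lam r : 0 <= kk L c phi lam r < 2 * PI.
Proof. apply red_spec. Qed.

Lemma kk_th L c phi lam r : th c phi lam (kk L c phi lam r) = Tr L c phi lam r.
Proof.
  unfold kk, Tr. destruct (red_spec (Kz L c phi lam (Z.of_nat r))) as [_ [j Hj]].
  rewrite Hj at 2. now rewrite th_period.
Qed.

Lemma kk_hh L c phi lam r : 0 < c -> 2 / c < INR L ->
  exists j : Z, hh L c phi lam (kk L c phi lam r) = PI + 2 * PI * IZR (Z.of_nat r - Z.of_nat L * j).
Proof.
  intros Hc HL. unfold kk. destruct (red_spec (Kz L c phi lam (Z.of_nat r))) as [_ [j Hj]].
  exists j. set (K := Kz L c phi lam (Z.of_nat r)) in *.
  assert (E : red K = K + 2 * PI * IZR (- j)) by (rewrite opp_IZR; lra).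
  rewrite E, hh_period. unfold K. rewrite Kz_spec by auto.
  rewrite minus_IZR, mult_IZR, opp_IZR, <- !INR_IZR_INZ. ring.
Qed.

Lemma kk_sol U L phi lam r : 0 < U -> 2 / (U / 4) < INR L ->
  cexpi (kk L (U / 4) phi lam r * INR L) = lw_factor U phi lam (kk L (U / 4) phi lam r).
Proof.
  intros HU HL. rewrite lw_eq by auto. apply cexpi_eq_iff.
  destruct (kk_hh L (U / 4) phi lam r ltac:(lra) HL) as [j Hj]. unfold hh in Hj.
  exists (Z.of_nat r - Z.of_nat L * j)%Z. lra.
Qed.

Lemma kk_inj L c phi lam r1 r2 : 0 < c -> 2 / c < INR L -> (r1 < L)%nat -> (r2 < L)%nat ->
  kk L c phi lam r1 = kk L c phi lam r2 -> r1 = r2.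
Proof.
  intros Hc HL H1 H2 E.
  destruct (kk_hh L c phi lam r1 Hc HL) as [j1 E1].
  destruct (kk_hh L c phi lam r2 Hc HL) as [j2 E2].
  rewrite E in E1. rewrite E1 in E2.
  assert (Z : IZR ((Z.of_nat r1 - Z.of_nat L * j1) - (Z.of_nat r2 - Z.of_nat L * j2)) = 0).
  { rewrite minus_IZR. pose proof PI_RGT_0. apply (Rmult_eq_reg_l (2 * PI)); [|lra]. rewrite Rmult_0_r. lra. }
  apply eq_IZR_R0 in Z.
  assert (Hd : (Z.of_nat L * (j1 - j2) = Z.of_nat r1 - Z.of_nat r2)%Z) by lia.
  destruct (Z.lt_trichotomy (j1 - j2) 0) as [Hn|[H0|Hp]].
  - assert (Z.of_nat L * (j1 - j2) <= - Z.of_nat L)%Z by nia. lia.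
  - rewrite H0 in Hd. lia.
  - assert (Z.of_nat L * (j1 - j2) >= Z.of_nat L)%Z by nia. lia.
Qed.

Lemma kk_complete U L phi lam k : 0 < U -> 2 / (U / 4) < INR L -> 0 <= k < 2 * PI ->
  cexpi (k * INR L) = lw_factor U phi lam k -> exists r, (r < L)%nat /\ k = kk L (U / 4) phi lam r.
Proof.
  intros HU HL Hk E. set (c := U / 4) in *. assert (Hc : 0 < c) by (unfold c; lra).
  rewrite lw_eq in E by auto. apply cexpi_eq_iff in E. destruct E as [I HI]. fold c in HI.
  assert (HL0 := INR_L_pos L c Hc HL).
  assert (HLz : (Z.of_nat L > 0)%Z) by (assert (L <> 0%nat) by (intro; subst; simpl in HL0; lra); lia).
  set (r := Z.to_nat (I mod Z.of_nat L)). set (j := (I / Z.of_nat L)%Z).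
  assert (Hr : Z.of_nat r = (I mod Z.of_nat L)%Z) by (unfold r; apply Z2Nat.id; apply Z.mod_pos_bound; lia).
  assert (HrL : (r < L)%nat) by (pose proof (Z.mod_pos_bound I (Z.of_nat L)); lia).
  assert (HIr : I = (Z.of_nat L * j + Z.of_nat r)%Z) by (rewrite Hr; unfold j; apply Z.div_mod; lia).
  exists r. split; auto.
  assert (HK : k + 2 * PI * IZR (- j) = Kz L c phi lam (Z.of_nat r)).
  { apply Kz_unique; auto. rewrite hh_period. unfold hh.
    assert (IZR I = INR L * IZR j + IZR (Z.of_nat r)) by (rewrite HIr, plus_IZR, mult_IZR, <- !INR_IZR_INZ; ring).
    rewrite opp_IZR. nra. }
  unfold kk. symmetry. apply (red_unique _ _ (- j)); auto.
Qed.

Fixpoint ins (x : R) (l : list R) : list R :=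
  match l with
  | nil => x :: nil
  | y :: t => if Rle_dec x y then x :: y :: t else y :: ins x t
  end.

Fixpoint isort (l : list R) : list R :=
  match l with nil => nil | x :: t => ins x (isort t) end.

Lemma ins_perm x l : Permutation (x :: l) (ins x l).
Proof.
  induction l as [|y t IH]; simpl; auto.
  destruct (Rle_dec x y); auto.
  eapply perm_trans; [apply perm_swap|]. now constructor.
Qed.

Lemma isort_perm l : Permutation l (isort l).
Proof.
  induction l as [|x t IH]; simpl; auto.
  eapply perm_trans; [apply perm_skip, IH|]. apply ins_perm.
Qed.

Lemma ins_sorted x l : Sorted Rle l -> Sorted Rle (ins x l).
Proof.
  induction l as [|y t IH]; simpl; intros H; auto.
  destruct (Rle_dec x y) as [Hxy|Hxy].
  - constructor; auto.
  - apply Sorted_inv in H as [Ht Hh]. constructor; auto.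
    destruct t as [|z t']; simpl.
    + constructor. lra.
    + destruct (Rle_dec x z); constructor; [lra|]. inversion Hh; auto.
Qed.

Lemma isort_sorted l : Sorted Rle (isort l).
Proof. induction l; simpl; auto using ins_sorted. Qed.

Lemma sorted_perm_eq {A : Type} (le : A -> A -> Prop) :
  (forall x y z, le x y -> le y z -> le x z) -> (forall x y, le x y -> le y x -> x = y) ->
  forall l1 l2, Sorted le l1 -> Sorted le l2 -> Permutation l1 l2 -> l1 = l2.
Proof.
  intros Htr Has l1. induction l1 as [|a l1 IH]; intros l2 H1 H2 HP.
  - symmetry. now apply Permutation_nil.
  - destruct l2 as [|b l2]. { apply Permutation_sym, Permutation_nil in HP. discriminate. }
    apply Sorted_StronglySorted in H1; [|exact Htr]. apply Sorted_StronglySorted in H2; [|exact Htr].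
    assert (Hab : a = b).
    { destruct (Permutation_in a HP (or_introl eq_refl)) as [E|Ha]; auto.
      destruct (Permutation_in b (Permutation_sym HP) (or_introl eq_refl)) as [E|Hb]; auto.
      apply StronglySorted_inv in H1 as [_ F1]. apply StronglySorted_inv in H2 as [_ F2].
      rewrite Forall_forall in F1, F2. apply Has; auto. }
    subst b. f_equal. apply IH.
    + apply StronglySorted_Sorted. now apply StronglySorted_inv in H1.
    + apply StronglySorted_Sorted. now apply StronglySorted_inv in H2.
    + eapply Permutation_cons_inv; eauto.
Qed.

Lemma sorted_R_eq l1 l2 : Sorted Rle l1 -> Sorted Rle l2 -> Permutation l1 l2 -> l1 = l2.
Proof. apply sorted_perm_eq; intros; lra. Qed.

Lemma sorted_lt_nodup l : Sorted Rlt l -> NoDup l.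
Proof.
  intros H. apply Sorted_StronglySorted in H; [|intros x y z; lra].
  induction H; constructor; auto.
  intros Hin. rewrite Forall_forall in H0. specialize (H0 _ Hin). lra.
Qed.

Lemma sorted_le_lt l : Sorted Rle l -> NoDup l -> Sorted Rlt l.
Proof.
  intros H Hn. apply Sorted_StronglySorted in H; [|intros x y z; lra].
  apply StronglySorted_Sorted.
  induction H; constructor.
  - apply IHStronglySorted. now inversion Hn.
  - inversion Hn; subst. rewrite Forall_forall in *. intros x Hx.
    destruct (H0 x Hx); auto. subst. contradiction.
Qed.

Lemma sorted_lt_le l : Sorted Rlt l -> Sorted Rle l.
Proof. intros H. induction H; constructor; auto. inversion H0; constructor; lra. Qed.

Fixpoint comb (k : nat) (l : list nat) : list (list nat) :=
  match k, l with
  | O, _ => nil :: nil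
  | S k', nil => nil
  | S k', x :: t => map (cons x) (comb k' t) ++ comb (S k') t
  end.

Lemma comb_nil k l : (length l < k)%nat -> comb k l = nil.
Proof.
  revert k. induction l as [|x t IH]; intros k H; destruct k; simpl in *; try lia; auto.
  rewrite (IH k) by lia. rewrite (IH (S k)) by lia. reflexivity.
Qed.

Lemma comb_len l k : (k <= length l)%nat -> INR (length (comb k l)) = Binomial.C (length l) k.
Proof.
  revert k. induction l as [|x t IH]; intros k Hk.
  - simpl in Hk. assert (k = 0%nat) by lia. subst. simpl. now rewrite C_n_0.
  - destruct k as [|k].
    + simpl. now rewrite C_n_0.
    + simpl length in *. cbn [comb]. rewrite length_app, length_map, plus_INR.
      destruct (Nat.eq_dec k (length t)) as [E|E].
      * rewrite (comb_nil (S k) t) by lia. rewrite E, IH by lia. simpl length.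
        rewrite !C_n_n. simpl. lra.
      * rewrite !IH by lia. apply pascal. lia.
Qed.

Lemma comb_props k l A : In A (comb k l) ->
  length A = k /\ incl A l /\ (StronglySorted lt l -> StronglySorted lt A).
Proof.
  revert k A. induction l as [|x t IH]; intros k A HA; destruct k as [|k]; simpl in HA.
  - destruct HA as [<-|[]]. split; [reflexivity| split; [intros a []| intros; constructor]].
  - contradiction.
  - destruct HA as [<-|[]]. split; [reflexivity| split; [intros a []| intros; constructor]].
  - apply in_app_or in HA. destruct HA as [HA|HA].
    + apply in_map_iff in HA. destruct HA as [B [<- HB]].
      destruct (IH _ _ HB) as [H1 [H2 H3]]. repeat split.
      * simpl; auto.
      * intros a [<-|Ha]; [left; auto|right; auto].
      * intros Hs. apply StronglySorted_inv in Hs as [Hs Hf]. constructor; auto.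
        rewrite Forall_forall in *. intros a Ha. apply Hf, H2, Ha.
    + destruct (IH _ _ HA) as [H1 [H2 H3]]. repeat split; auto.
      * intros a Ha; right; auto.
      * intros Hs. apply H3. now apply StronglySorted_inv in Hs.
Qed.

Lemma comb_nodup k l : NoDup l -> NoDup (comb k l).
Proof.
  revert k. induction l as [|x t IH]; intros k Hl; destruct k as [|k]; simpl.
  - repeat constructor; auto.
  - constructor.
  - repeat constructor; auto.
  - inversion Hl; subst. apply NoDup_app.
    + apply FinFun.Injective_map_NoDup; [intros a b E; now injection E|]. auto.
    + auto.
    + intros a Ha Hb. apply in_map_iff in Ha as [B [<- _]].
      destruct (comb_props _ _ _ Hb) as [_ [Hi _]]. apply H1, Hi. now left.
Qed.

Lemma comb_complete l B : NoDup l -> NoDup B -> incl B l ->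
  exists A, In A (comb (length B) l) /\ Permutation A B.
Proof.
  revert B. induction l as [|x t IH]; intros B Hl HB Hi.
  - destruct B as [|b B]; [|exfalso; apply (Hi b); now left].
    exists nil. simpl; auto.
  - inversion Hl; subst.
    destruct (in_dec Nat.eq_dec x B) as [Hx|Hx].
    + destruct (in_split _ _ Hx) as [B1 [B2 EB]]. subst B.
      destruct (NoDup_remove _ _ _ HB) as [HB' Hx'].
      destruct (IH (B1 ++ B2)) as [A [HA HP]]; auto.
      { intros a Ha. assert (In a (x :: t)) as Ht.
        { apply Hi. apply in_app_or in Ha. apply in_or_app. destruct Ha; [left|right; right]; auto. }
        destruct Ht as [<-|Ht]; auto. contradiction. }
      exists (x :: A). split.
      * rewrite length_app. simpl length. rewrite Nat.add_succ_r. simpl. apply in_or_app. left.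
        apply in_map. now rewrite length_app in HA.
      * eapply perm_trans; [apply perm_skip, HP|]. apply Permutation_middle.
    + destruct (IH B) as [A [HA HP]]; auto.
      { intros a Ha. destruct (Hi a Ha) as [<-|Ht]; auto. contradiction. }
      exists A. split; auto. destruct (length B) as [|k] eqn:E.
      * simpl. destruct B; [|discriminate]. apply Permutation_sym, Permutation_nil in HP. subst. now left.
      * simpl. apply in_or_app. now right.
Qed.

Lemma seq_sorted a n : StronglySorted lt (seq a n).
Proof.
  revert a. induction n as [|n IH]; intros a; simpl; constructor; auto.
  rewrite Forall_forall. intros x Hx. apply in_seq in Hx. lia.
Qed.

Lemma ss_nodup l : StronglySorted lt l -> NoDup l.
Proof.
  induction 1; constructor; auto. intros Hin. rewrite Forall_forall in H0. specialize (H0 _ Hin). lia.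
Qed.

Lemma sorted_nat_eq A B : StronglySorted lt A -> StronglySorted lt B -> incl A B -> incl B A -> A = B.
Proof.
  intros HA HB H1 H2. apply (sorted_perm_eq le); try (intros; lia).
  - apply StronglySorted_Sorted. clear -HA. induction HA; constructor; auto.
    rewrite Forall_forall in *; intros; specialize (H _ H0); lia.
  - apply StronglySorted_Sorted. clear -HB. induction HB; constructor; auto.
    rewrite Forall_forall in *; intros; specialize (H _ H0); lia.
  - apply NoDup_Permutation; auto using ss_nodup. intros x; split; auto.
Qed.

Lemma nodup_prod {A B : Type} (l1 : list A) (l2 : list B) : NoDup l1 -> NoDup l2 -> NoDup (list_prod l1 l2).
Proof.
  induction l1 as [|a l1 IH]; intros H1 H2; simpl; [constructor|].
  inversion H1; subst. apply NoDup_app; auto.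
  - apply FinFun.Injective_map_NoDup; auto. intros x y E; now injection E.
  - intros p Hp Hq. apply in_map_iff in Hp as [b [<- _]]. apply in_prod_iff in Hq as [Ha _]. contradiction.
Qed.

Definition lamA (L : nat) (c phi : R) (A : list nat) (y : R) : R :=
  epsilon (inhabits 0) (fun lam => G L c phi A lam = y).

Definition tgt (N m : nat) : R := - INR N * PI + 2 * PI * INR m.

Definition sol (L N : nat) (c phi : R) (p : list nat * nat) : list R * R :=
  let lam := lamA L c phi (fst p) (tgt N (snd p)) in
  (isort (map (kk L c phi lam) (fst p)), lam).

Lemma lamA_spec L c phi A N m : 0 < c -> 2 / c < INR L -> length A = N ->
  (1 <= m)%nat -> (m <= N - 1)%nat ->
  G L c phi A (lamA L c phi A (tgt N m)) = tgt N m.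
Proof.
  intros Hc HL HA H1 H2. unfold lamA. apply epsilon_spec. apply G_surj; auto.
  - intros E. subst A. simpl in *. lia.
  - rewrite HA. unfold tgt. pose proof PI_RGT_0. assert (HN1 : (1 <= N)%nat) by lia.
    apply le_INR in H1. apply le_INR in H2. rewrite minus_INR in H2 by lia. simpl INR in *.
    assert (PI * 1 <= PI * INR m) by (apply Rmult_le_compat_l; lra).
    assert (PI * INR m <= PI * (INR N - 1)) by (apply Rmult_le_compat_l; lra).
    split; nra.
Qed.

Lemma prodlw U phi lam ks : 0 < U ->
  fold_right Cmult (RtoC 1) (map (lw_factor U phi lam) ks) =
  cexpi (fold_right Rplus 0 (map (fun k => PI + th (U / 4) phi lam k) ks)).
Proof.
  intros HU. rewrite <- fold_cexpi, map_map. f_equal. apply map_ext. intros; now apply lw_eq.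
Qed.

Lemma sum_kk L c phi lam B :
  fold_right Rplus 0 (map (fun k => PI + th c phi lam k) (map (kk L c phi lam) B)) =
  INR (length B) * PI + G L c phi B lam.
Proof.
  unfold G. induction B as [|b B IH]; cbn [map fold_right length]; [simpl; lra|].
  rewrite IH, kk_th, S_INR. ring.
Qed.

Lemma lift_list (f : nat -> R) (L : nat) (ks : list R) :
  (forall k, In k ks -> exists r, (r < L)%nat /\ k = f r) ->
  exists B, map f B = ks /\ (forall r, In r B -> (r < L)%nat).
Proof.
  induction ks as [|k ks IH]; intros H.
  - exists nil; split; auto. intros r [].
  - destruct (H k (or_introl eq_refl)) as [r [Hr ->]].
    destruct IH as [B [HB1 HB2]]. { intros k' Hk'. apply H. now right. }
    exists (r :: B). split; [simpl; now rewrite HB1|]. intros r' [<-|Hr']; auto.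
Qed.

Lemma cexpi_2PI_nat (m : nat) : cexpi (2 * PI * INR m) = RtoC 1.
Proof.
  replace (RtoC 1) with (cexpi 0) by (unfold cexpi, RtoC; now rewrite cos_0, sin_0).
  apply cexpi_eq_iff. exists (Z.of_nat m). rewrite <- INR_IZR_INZ. ring.
Qed.

Theorem proposition1 (L N : nat) (U phi : R)
  (hL : (2 <= L)%nat) (hN2 : (2 <= N)%nat) (hNL : (N <= L)%nat)
  (hU : U > 8 / INR L) (hphi0 : 0 <= phi) (hphi1 : phi < 2 * PI / INR L) :
  exists sols : list (list R * R),
    NoDup sols /\
    (forall s, LW_real_solution L N U phi s <-> In s sols) /\
    INR (length sols) = Binomial.C L N * INR (N - 1).
Proof.
  assert (HL0 : 2 <= INR L) by (apply le_INR in hL; simpl in hL; lra).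
  assert (HU0 : 0 < U).
  { assert (0 < 8 / INR L) by (apply Rdiv_lt_0_compat; lra). lra. }
  set (c := U / 4).
  assert (Hc : 0 < c) by (unfold c; lra).
  assert (HLc : 2 / c < INR L).
  { unfold c. replace (2 / (U / 4)) with (8 / U) by (field; lra).
    assert (U * INR L > 8).
    { apply Rmult_gt_compat_r with (r := INR L) in hU; [|lra].
      replace (8 / INR L * INR L) with 8 in hU by (field; lra). lra. }
    apply Rmult_lt_reg_r with U; auto. replace (8 / U * U) with 8 by (field; lra). lra. }
  set (P := list_prod (comb N (seq 0 L)) (seq 1 (N - 1))).
  exists (map (sol L N c phi) P).
  assert (Hcomb : forall A, In A (comb N (seq 0 L)) ->
            length A = N /\ (forall r, In r A -> (r < L)%nat) /\ StronglySorted lt A /\ A <> nil).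
  { intros A HA. destruct (comb_props _ _ _ HA) as [H1 [H2 H3]].
    split; [auto|split; [|split]].
    - intros r Hr. apply H2, in_seq in Hr. lia.
    - apply H3, seq_sorted.
    - intros E; rewrite E in H1; simpl in H1; lia. }
  assert (Hkknodup : forall A lam, (forall r, In r A -> (r < L)%nat) -> NoDup A -> NoDup (map (kk L c phi lam) A)).
  { intros A lam HA HnA. apply FinFun.Injective_map_NoDup_in; auto.
    intros x y Hx Hy. apply kk_inj; auto. }
  split; [|split].
  -
    apply FinFun.Injective_map_NoDup_in.
    2: { apply nodup_prod; [apply comb_nodup|]; apply seq_NoDup. }
    intros [A1 m1] [A2 m2] Hp1 Hp2 E.
    apply in_prod_iff in Hp1 as [HA1 Hm1]. apply in_prod_iff in Hp2 as [HA2 Hm2].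
    apply in_seq in Hm1. apply in_seq in Hm2.
    destruct (Hcomb _ HA1) as [L1 [R1 [S1 N1]]]. destruct (Hcomb _ HA2) as [L2 [R2 [S2 N2]]].
    unfold sol in E; simpl in E. injection E as E1 E2.
    set (lam1 := lamA L c phi A1 (tgt N m1)) in *. set (lam2 := lamA L c phi A2 (tgt N m2)) in *.
    assert (HP : Permutation (map (kk L c phi lam1) A1) (map (kk L c phi lam1) A2)).
    { eapply perm_trans; [apply isort_perm|]. rewrite E1, <- E2. apply Permutation_sym, isort_perm. }
    assert (HAeq : A1 = A2).
    { apply sorted_nat_eq; auto.
      - intros r Hr. assert (Hin : In (kk L c phi lam1 r) (map (kk L c phi lam1) A2)).
        { apply (Permutation_in _ HP). now apply in_map. }
        apply in_map_iff in Hin as [r' [Er' Hr']].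
        assert (r' = r) by (apply (kk_inj L c phi lam1); auto). now subst.
      - intros r Hr. assert (Hin : In (kk L c phi lam1 r) (map (kk L c phi lam1) A1)).
        { apply (Permutation_in _ (Permutation_sym HP)). now apply in_map. }
        apply in_map_iff in Hin as [r' [Er' Hr']].
        assert (r' = r) by (apply (kk_inj L c phi lam1); auto). now subst. }
    subst A2.
    assert (G1 := lamA_spec L c phi A1 N m1 Hc HLc L1 ltac:(lia) ltac:(lia)).
    assert (G2 := lamA_spec L c phi A1 N m2 Hc HLc L1 ltac:(lia) ltac:(lia)).
    fold lam1 in G1. fold lam2 in G2. rewrite E2 in G1. rewrite G1 in G2.
    unfold tgt in G2. pose proof PI_RGT_0.
    assert (INR m1 = INR m2) by nra. apply INR_eq in H0. now subst.
  - intros [ks lam]. split.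
    +
      intros [Hlen [Hsort [Hrange [Heq Hprod]]]].
      destruct (lift_list (kk L c phi lam) L ks) as [B [HB HBL]].
      { intros k Hk. apply (kk_complete U L phi lam k); auto. }
      assert (HnB : NoDup B).
      { apply (NoDup_map_inv (kk L c phi lam)). rewrite HB. now apply sorted_lt_nodup. }
      destruct (comb_complete (seq 0 L) B (seq_NoDup _ _) HnB) as [A [HA HPA]].
      { intros r Hr. apply in_seq. specialize (HBL r Hr). lia. }
      assert (HlB : length B = N) by (rewrite <- Hlen, <- HB; symmetry; apply length_map).
      rewrite HlB in HA.
      destruct (Hcomb _ HA) as [LA [RA [SA NA]]].
      rewrite prodlw in Hprod by auto. fold c in Hprod. rewrite <- HB, sum_kk in Hprod.
      rewrite <- (G_perm L c phi A B lam HPA), HlB in Hprod.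
      replace (RtoC 1) with (cexpi 0) in Hprod by (unfold cexpi, RtoC; now rewrite cos_0, sin_0).
      apply cexpi_eq_iff in Hprod. destruct Hprod as [j Hj].
      pose proof (G_bound L c phi A lam NA) as Hb. rewrite LA in Hb.
      pose proof PI_RGT_0.
      assert (Hj1 : 0 < IZR j) by nra.
      assert (Hj2 : IZR j < INR N) by nra.
      apply lt_IZR in Hj1. rewrite INR_IZR_INZ in Hj2. apply lt_IZR in Hj2.
      set (m := Z.to_nat j).
      assert (Hm : INR m = IZR j) by (unfold m; rewrite INR_IZR_INZ; f_equal; lia).
      assert (HGm : G L c phi A lam = tgt N m) by (unfold tgt; rewrite Hm; lra).
      assert (Hlam : lamA L c phi A (tgt N m) = lam).
      { apply (G_inj L c phi A); auto. rewrite lamA_spec; auto; lia. }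
      apply in_map_iff. exists (A, m). split.
      * unfold sol; simpl. rewrite Hlam. f_equal.
        apply sorted_R_eq; [apply isort_sorted| now apply sorted_lt_le |].
        eapply perm_trans; [apply Permutation_sym, isort_perm|].
        rewrite <- HB. apply Permutation_map. exact HPA.
      * apply in_prod; auto. apply in_seq. lia.
    +
      intros Hin. apply in_map_iff in Hin as [[A m] [Es Hp]].
      apply in_prod_iff in Hp as [HA Hm]. apply in_seq in Hm.
      destruct (Hcomb _ HA) as [LA [RA [SA NA]]].
      unfold sol in Es; simpl in Es. injection Es as E1 E2.
      set (lam0 := lamA L c phi A (tgt N m)) in *. subst ks lam.
      assert (HPk := isort_perm (map (kk L c phi lam0) A)).
      assert (HnA : NoDup (map (kk L c phi lam0) A)) by (apply Hkknodup; auto using ss_nodup).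
      unfold LW_real_solution. split; [|split; [|split; [|split]]].
      * rewrite <- (Permutation_length HPk), length_map. auto.
      * apply sorted_le_lt; [apply isort_sorted|]. eapply Permutation_NoDup; eauto.
      * intros k Hk. apply (Permutation_in _ (Permutation_sym HPk)) in Hk.
        apply in_map_iff in Hk as [r [<- _]]. apply kk_range.
      * intros k Hk. apply (Permutation_in _ (Permutation_sym HPk)) in Hk.
        apply in_map_iff in Hk as [r [<- _]]. apply kk_sol; auto.
      * rewrite prodlw by auto. fold c.
        rewrite <- (sum_perm _ _ (Permutation_map _ HPk)), sum_kk, LA.
        assert (HG := lamA_spec L c phi A N m Hc HLc LA ltac:(lia) ltac:(lia)). fold lam0 in HG.
        rewrite HG. unfold tgt.
        replace (INR N * PI + (- INR N * PI + 2 * PI * INR m)) with (2 * PI * INR m) by ring.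
        apply cexpi_2PI_nat.
  - rewrite length_map. unfold P. rewrite length_prod, mult_INR, comb_len, !length_seq; auto.
    rewrite length_seq. auto.
Qed.
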